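(* Let $A,B$ be non-empty compact subsets of $\mathbb{R}$. Then $\max\{\dim_HA,\dim_HB\}\le\dim_H\Lambda(A,B)$, where $\Lambda(A,B)\subseteq\mathbb{R}^2$ carries the Euclidean metric.
   Context: $\dim_H$ is Hausdorff dimension. For $b\in\mathbb{R}$, $\Lambda_A(b)=\{a\in A:|b-a|=\min_{a'\in A}|b-a'|\}$; the set of metric pairs is $\Lambda(A,B)=\{(a,b)\in A\times B:a\in\Lambda_A(b)\text{ or }b\in\Lambda_B(a)\}$. *)

(* Defs.v *)
From HB Require Import structures.
From mathcomp Require Import all_boot all_order all_algebra.
From mathcomp Require Import all_classical all_reals all_analysis.
Set Implicit Arguments. Unset Strict Implicit. Unset Printing Implicit Defensive.
Import Order.TTheory GRing.Theory Num.Theory.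
Import numFieldNormedType.Exports.
Local Open Scope classical_set_scope.
Local Open Scope ring_scope.

Section Hausdorff.
Variables (R : realType) (T : Type) (d : T -> T -> R).

Definition diam (E : set T) : \bar R :=
  ereal_sup ([set 0%:E] `|` [set (d x y)%:E | x in E & y in E]).

(* the summand |F|^s of a cover, with the convention |set0|^s = 0
   (and |F|^0 = 1 for non-empty F, since 0 `^ 0 = 1) *)
Definition cover_term (s : R) (F : set T) : \bar R :=
  if `[< F = set0 >] then 0%E else ((fine (diam F)) `^ s)%:E.

Definition hausdorff_content (s delta : R) (E : set T) : \bar R :=
  ereal_inf [set (\sum_(0 <= i <oo) cover_term s (F i))%E
            | F in [set F : nat -> set T |
                     E `<=` \bigcup_i F i /\ forall i, (diam (F i) <= delta%:E)%E]].

Definition hausdorff_measure (s : R) (E : set T) : \bar R :=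
  ereal_sup [set hausdorff_content s delta E | delta in [set delta : R | 0 < delta]].

(* Hausdorff dimension: inf { s >= 0 | H^s(E) = 0 } (= +oo if no such s) *)
Definition hausdorff_dim (E : set T) : \bar R :=
  ereal_inf [set s%:E | s in [set s : R | 0 <= s /\ hausdorff_measure s E = 0%E]].

End Hausdorff.

Definition dist1 {R : realType} (x y : R) : R := `|x - y|.
Definition dist2 {R : realType} (p q : R * R) : R :=
  Num.sqrt ((p.1 - q.1) ^+ 2 + (p.2 - q.2) ^+ 2).

Notation dimH1 := (hausdorff_dim dist1).
Notation dimH2 := (hausdorff_dim dist2).

Definition nearest {R : realType} (A : set R) (b : R) : set R :=
  [set a | A a /\ forall a', A a' -> `|b - a| <= `|b - a'|].

Definition metric_pairs {R : realType} (A B : set R) : set (R * R) :=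
  [set p | A p.1 /\ B p.2 /\ (nearest A p.2 p.1 \/ nearest B p.1 p.2)].

(* Main.v *)
Require Import Defs.
From HB Require Import structures.
From mathcomp Require Import all_boot all_order all_algebra.
From mathcomp Require Import all_classical all_reals all_analysis.
Import Order.TTheory GRing.Theory Num.Theory.
Import numFieldNormedType.Exports.
Local Open Scope classical_set_scope.
Local Open Scope ring_scope.

Section Lip.
Variables (R : realType) (X Y : Type) (d1 : X -> X -> R) (d2 : Y -> Y -> R) (f : Y -> X).
Hypothesis lip : forall x y, d1 (f x) (f y) <= d2 x y.

Lemma diam_ge0 {T} (d : T -> T -> R) E : (0 <= diam d E)%E.
Proof. by apply: ereal_sup_ubound; left. Qed.

Lemma diam_img F : (diam d1 (f @` F) <= diam d2 F)%E.
Proof.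
apply: ge_ereal_sup => z [->|[u [x Fx <-] [v [y Fy <-] <-]]].
  exact: diam_ge0.
apply: le_trans (_ : (d2 x y)%:E <= _)%E; first by rewrite lee_fin.
by apply: ereal_sup_ubound; right; exists x => //; exists y.
Qed.

Lemma cover_term_ge0 {T} (d : T -> T -> R) s F : (0 <= cover_term d s F)%E.
Proof. rewrite /cover_term; case: asboolP => // _; rewrite lee_fin powR_ge0 //. Qed.

Lemma cover_term_img s delta F : 0 <= s -> (diam d2 F <= delta%:E)%E ->
  (cover_term d1 s (f @` F) <= cover_term d2 s F)%E.
Proof.
move=> s0 dF; rewrite /cover_term.
case: (asboolP (F = set0)) => [->|F0]; first by rewrite image_set0 asboolT.
case: asboolP => [/image_set0_set0 //|_].
have h1 := diam_img F; have h0 := diam_ge0 d1 (f @` F).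
move: h1 h0 dF; case: (diam d2 F) => [r| |] //; case: (diam d1 _) => [r'| |] //.
rewrite !lee_fin /= => h1 h0 _; apply: ge0_ler_powR => //; rewrite nnegrE //.
exact: le_trans h1.
Qed.

Lemma content_img s delta (A : set X) (E : set Y) : 0 <= s -> A `<=` f @` E ->
  (hausdorff_content d1 s delta A <= hausdorff_content d2 s delta E)%E.
Proof.
move=> s0 AE; apply: le_ereal_inf_tmp => _ [F [EF dF] <-].
apply: (@le_trans _ _ (\sum_(0 <= i <oo) cover_term d1 s (f @` F i))%E).
  apply: ereal_inf_lbound; exists (fun i => f @` F i) => //; split.
    move=> x /AE [y /EF [i _ Fy] <-]; exists i => //; exists y => //.
  by move=> i; apply: le_trans (diam_img _) (dF i).
apply: lee_nneseries => [i _ _|i _]; first exact: (cover_term_ge0 d1 s (f @` F i)).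
exact: cover_term_img (dF i).
Qed.

Lemma content_ge0 {T} (d : T -> T -> R) s delta E : (0 <= hausdorff_content d s delta E)%E.
Proof.
apply: le_ereal_inf_tmp => _ [F _ <-]; apply: nneseries_ge0 => i _ _; exact: cover_term_ge0.
Qed.

Lemma measure0_img s (A : set X) (E : set Y) : 0 <= s -> A `<=` f @` E ->
  hausdorff_measure d2 s E = 0%E -> hausdorff_measure d1 s A = 0%E.
Proof.
move=> s0 AE H0; apply/eqP; rewrite eq_le; apply/andP; split.
  apply: ge_ereal_sup => _ [delta dp <-]; rewrite -H0.
  apply: le_trans (@content_img s delta A E s0 AE : (hausdorff_content d1 s delta A <= _)%E) _.
  by apply: ereal_sup_ubound; exists delta.
apply: le_trans (content_ge0 d1 s 1 A) _.
by apply: ereal_sup_ubound; exists 1 => //=.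
Qed.

Lemma dim_img (A : set X) (E : set Y) : A `<=` f @` E ->
  (hausdorff_dim d1 A <= hausdorff_dim d2 E)%E.
Proof.
move=> AE; apply: ereal_inf_le_tmp => _ [s [s0 Hs] <-]; exists s => //; split => //.
exact: measure0_img Hs.
Qed.
End Lip.

Lemma nearest_ex (R : realType) (B : set R) (a : R) : compact B -> B !=set0 ->
  exists b, nearest B a b.
Proof.
move=> cB B0.
have cf : {within B, continuous (fun b : R => `|a - b|)}.
  apply: continuous_subspaceT => x; apply: cvg_norm; apply: cvgB; [exact: cvg_cst | exact: cvg_id].
have [b /set_mem Bb bmin] := compact_EVT_min B0 cB cf.
exists b; split => // b' Bb'; exact: bmin (mem_set Bb').
Qed.

Theorem proposition4p1 (R : realType) (A B : set R) :
  compact A -> A !=set0 -> compact B -> B !=set0 ->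
  (maxe (dimH1 A) (dimH1 B) <= dimH2 (metric_pairs A B))%E.
Proof.
move=> cA A0 cB B0; rewrite ge_max; apply/andP; split.
- apply: (@dim_img R _ _ dist1 dist2 fst).
    move=> p q; rewrite /dist1 /dist2 -sqrtr_sqr; apply: ler_wsqrtr.
    by rewrite lerDl sqr_ge0.
  move=> a Aa; have [b [Bb bmin]] := @nearest_ex R B a cB B0.
  by exists (a, b) => //; split; [|split; [|right; split]].
- apply: (@dim_img R _ _ dist1 dist2 snd).
    move=> p q; rewrite /dist1 /dist2 -sqrtr_sqr; apply: ler_wsqrtr.
    by rewrite lerDr sqr_ge0.
  move=> b Bb; have [a [Aa amin]] := @nearest_ex R A b cA A0.
  by exists (a, b) => //; split; [|split; [|left; split]].
Qed.
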